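(* Let $n,m,k$ be positive integers with $n\le m$ and $k<m\le kn$. Then $$\sup_I \frac{\text{OPT-ESW}(I)}{\max_{\mathcal{A}\in \mathcal{C}_k(I)}\text{ESW}(\mathcal{A})}=\max\left\{\frac{m-n+1}{k},1\right\},$$ where the supremum ranges over all single-category instances $I$ with $n$ agents, $m$ goods and cardinality constraint $k$.
   Context: A single-category instance has $n$ agents and a set $M$ of $m$ indivisible goods; each agent $i$ has an additive utility function $u_i:2^M\to\mathbb{R}_{\ge 0}$ with $u_i(\emptyset)=0$ and $u_i(M)=1$. An allocation is a partition $(A_1,\dots,A_n)$ of $M$; it is cardinal if $|A_i|\le k$ for all $i$, and $\mathcal{C}_k(I)$ denotes the set of cardinal allocations. $\text{ESW}(\mathcal{A})=\min_i u_i(A_i)$ and $\text{OPT-ESW}(I)$ is its maximum over all allocations. If $\text{OPT-ESW}(I)=0$ the ratio is defined to be $1$. *)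

(* Defs.v *)
From HB Require Import structures.
From mathcomp Require Import all_boot all_order all_algebra.
From mathcomp Require Import all_classical all_reals ereal.
Set Implicit Arguments. Unset Strict Implicit. Unset Printing Implicit Defensive.
Import Order.TTheory GRing.Theory Num.Theory.
Local Open Scope ring_scope.

Section Defs.
Variables (R : realType) (n m : nat).

Definition instance : set ('I_n -> 'I_m -> R) :=
  [set u | (forall i g, 0 <= u i g) /\ (forall i, \sum_(g < m) u i g = 1)].

(* An allocation (A_1,...,A_n) partitioning M: each good g goes to agent a g;
   A_i = [set g | a g == i] (bundles may be empty). *)
Definition bundle (a : {ffun 'I_m -> 'I_n}) (i : 'I_n) : {set 'I_m} :=
  [set g | a g == i].

Definition util (u : 'I_n -> 'I_m -> R) (i : 'I_n) (A : {set 'I_m}) : R :=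
  \sum_(g in A) u i g.

Definition cardinal (k : nat) (a : {ffun 'I_m -> 'I_n}) : bool :=
  [forall i, #|bundle a i| <= k]%N.

(* ESW = min_i u_i(A_i).  The neutral element 1 is harmless: for instances
   u_i(A_i) <= u_i(M) = 1, and n > 0 in the theorem. *)
Definition ESW (u : 'I_n -> 'I_m -> R) (a : {ffun 'I_m -> 'I_n}) : R :=
  \big[Num.min/1]_(i < n) util u i (bundle a i).

(* OPT-ESW: maximum over all allocations (ESW >= 0, so neutral 0 is harmless). *)
Definition OPT_ESW (u : 'I_n -> 'I_m -> R) : R :=
  \big[Num.max/0]_(a : {ffun 'I_m -> 'I_n}) ESW u a.

(* max ESW over cardinal allocations (nonempty when m <= k n). *)
Definition maxC_ESW (k : nat) (u : 'I_n -> 'I_m -> R) : R :=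
  \big[Num.max/0]_(a : {ffun 'I_m -> 'I_n} | cardinal k a) ESW u a.

(* The ratio, in the extended reals: 1 if OPT-ESW = 0 (paper's convention),
   +oo if the denominator vanishes while OPT-ESW > 0. *)
Definition esw_ratio (k : nat) (u : 'I_n -> 'I_m -> R) : \bar R :=
  if OPT_ESW u == 0 then 1%E
  else if maxC_ESW k u == 0 then +oo%E
  else (OPT_ESW u / maxC_ESW k u)%:E.

End Defs.

(* Main.v *)
Require Import Defs.
From HB Require Import structures.
From mathcomp Require Import all_boot all_order all_algebra.
From mathcomp Require Import all_classical all_reals ereal.
From mathcomp Require Import lra zify.
Import Order.TTheory GRing.Theory Num.Theory.
Local Open Scope ring_scope.

Section Gen.
Variables (R : realType) (n m : nat).
Implicit Types (u : 'I_n -> 'I_m -> R) (a : {ffun 'I_m -> 'I_n}).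

Lemma ESW_le1 u a : ESW u a <= 1.
Proof.
rewrite /ESW; elim/big_rec: _ => // i x _ hx.
by rewrite ge_min hx orbT.
Qed.

Lemma ESW_le_util u a i : ESW u a <= util u i (bundle a i).
Proof. exact: bigmin_le. Qed.

Lemma ESW_ge u a x : x <= 1 -> (forall i, x <= util u i (bundle a i)) -> x <= ESW u a.
Proof. move=> h1 h2; rewrite /ESW; exact: le_bigmin. Qed.

Lemma OPT_ge u a : ESW u a <= OPT_ESW u.
Proof. exact: le_bigmax. Qed.

Lemma OPT_le1 u : OPT_ESW u <= 1.
Proof. rewrite /OPT_ESW; apply: bigmax_le => // a _; exact: ESW_le1. Qed.

Lemma OPT_ge0 u : 0 <= OPT_ESW u.
Proof.
rewrite /OPT_ESW; elim/big_rec: _ => // i x _ hx.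
by rewrite le_max hx orbT.
Qed.

Lemma OPT_cases u : OPT_ESW u != 0 -> exists a, OPT_ESW u = ESW u a.
Proof.
rewrite /OPT_ESW.
apply: (big_ind (fun x => x != 0 -> exists a, x = ESW u a)) => //.
- by rewrite eqxx.
- by move=> x y hx hy; case: (leP x y).
- by move=> a _ _; exists a.
Qed.


Lemma maxC_ge k u a : cardinal k a -> ESW u a <= maxC_ESW k u.
Proof. by move=> h; rewrite /maxC_ESW; exact: le_bigmax_cond. Qed.

Lemma maxC_le k u x : 0 <= x -> (forall a, cardinal k a -> ESW u a <= x) -> maxC_ESW k u <= x.
Proof. by move=> h0 h; rewrite /maxC_ESW; exact: bigmax_le. Qed.

Lemma maxC_ge0 k u : 0 <= maxC_ESW k u.
Proof.
rewrite /maxC_ESW; elim/big_rec: _ => // i x _ hx.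
by rewrite le_max hx orbT.
Qed.

Lemma sum_card_opt (p : 'I_m -> option 'I_n) :
  (\sum_(i < n) #|[set g | p g == Some i]|)%N = #|[set g | p g != None]|.
Proof.
under eq_bigr => i _ do rewrite -sum1_card big_mkcond /=.
rewrite exchange_big /= -sum1_card [RHS]big_mkcond /=.
apply: eq_bigr => g _; rewrite inE.
under eq_bigr => i _ do rewrite inE.
case: (p g) => [j|] /=.
- rewrite (bigD1 j) //= eqxx big1 // => i hi.
  by case: eqP => // -[] e; rewrite e eqxx in hi.
- by rewrite big1.
Qed.

Lemma sum_card_bundle a : (\sum_(i < n) #|bundle a i|)%N = m.
Proof.
have := sum_card_opt (fun g => Some (a g)).
have -> : [set g | Some (a g) != None] = finset.setT by apply/setP => g; rewrite !inE.
have e : #|(finset.setT : {set 'I_m})| = m by rewrite cardsT card_ord.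
move=> h; rewrite -[RHS]e -h; apply: eq_bigr => i _.
by apply: eq_card => g; rewrite !inE.
Qed.


Lemma topk (T : finType) (w : T -> R) (k : nat) : (forall x, 0 <= w x) ->
  forall d (A : {set T}), #|A| = (k + d)%N ->
  exists2 S : {set T}, S \subset A &
    (#|S| = k /\ k%:R * \sum_(x in A) w x <= (k + d)%:R * \sum_(x in S) w x).
Proof.
move=> w0; elim=> [|d IH] A hA.
  by exists A => //; rewrite addn0 in hA *; split.
have [x0 hx0] : exists x, x \in A.
  by apply/set0Pn; rewrite -card_gt0 hA addnS.
case: (@arg_minP _ _ _ x0 (fun y => y \in A) w hx0) => x xA xmin.
have hA' : #|A :\ x| = (k + d)%N.
  by move: hA; rewrite (cardsD1 x) xA add1n addnS => -[].
have [S SA [hS hineq]] := IH _ hA'.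
have SA2 : S \subset A by exact: (fintype.subset_trans SA (subD1set A x)).
exists S => //; split=> //.
have hSx : k%:R * w x <= \sum_(y in S) w y.
  have : \sum_(y in S) w x <= \sum_(y in S) w y.
    apply: ler_sum => y yS; exact: (xmin y (fintype.subsetP SA2 y yS)).
  by move=> h; rewrite sumr_const hS -mulr_natl in h.
rewrite (big_setD1 x xA) /= addnS -addn1 natrD mulrDr mulrDl mul1r addrC.
exact: lerD.
Qed.

Lemma extend (k : nat) (i0 : 'I_n) : (m <= k * n)%N -> forall N (p : {ffun 'I_m -> option 'I_n}),
  #|[set g | p g == None]| = N ->
  (forall i, #|[set g | p g == Some i]| <= k)%N ->
  exists a : {ffun 'I_m -> 'I_n}, cardinal k a /\ forall g i, p g = Some i -> a g = i.
Proof.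
move=> hmk; elim=> [|N IH] p hN hk.
  have hS : forall g, p g != None.
    move=> g; apply/negP => /eqP e; move/eqP: hN; rewrite cards_eq0 => /eqP/setP/(_ g).
    by rewrite !inE e eqxx.
  exists [ffun g => odflt i0 (p g)]; split.
    apply/forallP => i; apply: leq_trans (hk i); apply: subset_leq_card.
    apply/fintype.subsetP => g; rewrite !inE ffunE.
    case e: (p g) => [j|] /=; first by move/eqP ->.
    by move: (hS g); rewrite e.
  by move=> g i; rewrite ffunE => ->.
have [g0 hg0] : exists g, p g == None.
  have : (0 < #|[set g | p g == None]|)%N by rewrite hN.
  by rewrite card_gt0 => /set0Pn [g]; rewrite inE => hg; exists g.
have [i hi] : exists i, (#|[set g | p g == Some i]| < k)%N.
  case: (pickP (fun i => (#|[set g | p g == Some i]| < k)%N)) => [i hi|hnone]; first by exists i.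
  have h1 : (k * n <= \sum_(i < n) #|[set g | p g == Some i]|)%N.
    apply: leq_trans (_ : (\sum_(i < n) k <= _)%N).
      by rewrite big_const_ord iter_addn_0 mulnC.
    by apply: leq_sum => i _; rewrite leqNgt hnone.
  rewrite sum_card_opt in h1.
  have hg : g0 \in ~: [set g | p g != None] by rewrite !inE negbK.
  have := cardsC [set g | p g != None]; rewrite card_ord => e.
  have : (0 < #|~: [set g | p g != None]|)%N by apply/card_gt0P; exists g0.
  lia.
pose p' := [ffun g => if g == g0 then Some i else p g].
have hN' : #|[set g | p' g == None]| = N.
  have -> : [set g | p' g == None] = [set g | p g == None] :\ g0.
    by apply/setP => g; rewrite !inE ffunE; case: (g =P g0) => [->|].
  by move: hN; rewrite (cardsD1 g0) inE hg0 add1n => -[].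
have hk' : forall j, (#|[set g | p' g == Some j]| <= k)%N.
  move=> j; case: (j =P i) => [->|nji].
    have -> : [set g | p' g == Some i] = g0 |: [set g | p g == Some i].
      apply/setP => g; rewrite !inE ffunE; case: (g =P g0) => [->|] //=.
      by rewrite eqxx.
    rewrite cardsU1; move: hi; case: (g0 \notin _) => /=; lia.
  apply: leq_trans (hk j); apply: subset_leq_card; apply/fintype.subsetP => g.
  rewrite !inE ffunE; case: (g =P g0) => // _ /eqP [] e.
  by case: nji.
have [a [ha hpa]] := IH p' hN' hk'.
exists a; split=> // g j hgj; apply: hpa; rewrite ffunE.
case: (g =P g0) => [e|//]; by move: hg0; rewrite -e hgj.
Qed.


Lemma upper k u : (0 < n)%N -> (0 < k)%N -> (n <= m)%N -> (m <= k * n)%N ->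
  instance u -> (esw_ratio k u <= (Num.max ((m - n + 1)%:R / k%:R) 1)%:E)%E.
Proof.
move=> hn hk hnm hmk [u0 u1].
rewrite /esw_ratio; case: eqP => [_|hO]; first by rewrite lee_fin le_max lexx orbT.
have [a ha] := OPT_cases u (introN eqP hO).
have v0 : 0 < OPT_ESW u by rewrite lt_def OPT_ge0 andbT; apply/eqP.
have v1 := OPT_le1 u.
move: v0 v1 ha hO; set v := OPT_ESW u => v0 v1 ha hO.
have hv : forall i, v <= util u i (bundle a i) by move=> i; rewrite ha; exact: ESW_le_util.
have ne : forall i, (0 < #|bundle a i|)%N.
  move=> i; rewrite card_gt0; apply/negP => /eqP e; have := hv i.
  by rewrite e /util big_set0 => h; move: v0; rewrite ltNge h.
set M := (m - n + 1)%N.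
have hM0 : (0 < M)%N by rewrite /M; lia.
have hB : forall i, (#|bundle a i| <= M)%N.
  move=> i; have h2 := sum_card_bundle a; rewrite (bigD1 i) //= in h2.
  move: h2; set s := (\sum_(j < n | _) _)%N => h2.
  have h1 : (n.-1 <= s)%N.
    apply: leq_trans (_ : (\sum_(j < n | j != i) 1 <= _)%N).
      have e : #|[set x : 'I_n | x != i]| = n.-1.
        have := cardsC1 i; rewrite card_ord => <-; apply: eq_card => j; by rewrite !inE.
      by rewrite sum1dep_card e.
    by apply: leq_sum => j _; exact: ne.
  move: h2; set c := #|bundle a i| => h2.
  rewrite /M; lia.
have hS : forall i, exists S : {set 'I_m}, [/\ S \subset bundle a i, (#|S| <= k)%N &
    (minn k M)%:R * v <= M%:R * \sum_(g in S) u i g].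
  move=> i; have hvB := hv i; move: hvB; rewrite /util; set B := bundle a i => hvB.
  have sB0 : 0 <= \sum_(g in B) u i g by apply: sumr_ge0 => g _; exact: u0.
  case: (leqP k #|B|) => hkB.
    have hBd : #|B| = (k + (#|B| - k))%N by rewrite subnKC.
    have [S SB [hSk hin]] := @topk _ (u i) k (u0 i) _ _ hBd.
    have sS0 : 0 <= \sum_(g in S) u i g by apply: sumr_ge0 => g _; exact: u0.
    exists S; split => //; first by rewrite hSk.
    rewrite (_ : minn k M = k); last by apply/minn_idPl; apply: leq_trans hkB (hB i).
    rewrite -hBd in hin.
    apply: le_trans (_ : k%:R * \sum_(g in B) u i g <= _).
      by apply: ler_wpM2l => //; exact: ler0n.
    apply: le_trans hin _; apply: ler_wpM2r => //.
    by rewrite ler_nat; exact: hB.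
  exists B; split => //; first exact: ltnW.
  apply: le_trans (_ : M%:R * v <= _).
    by apply: ler_wpM2r; [exact: ltW | rewrite ler_nat geq_minr].
  by apply: ler_wpM2l => //; exact: ler0n.
have [S hS'] := fin_all_exists hS.
have key : forall i g, (g \in S i) = (a g == i) && (g \in S (a g)).
  move=> i g; apply/idP/andP => [gS|[/eqP <- //]].
  have [sub _ _] := hS' i; have := fintype.subsetP sub g gS; rewrite inE => /eqP e.
  by rewrite e eqxx.
pose p := [ffun g => if g \in S (a g) then Some (a g) else None].
have hpS : forall i, [set g | p g == Some i] = S i.
  move=> i; apply/setP => g; rewrite !inE ffunE (key i g).
  case: ifP => _ /=; rewrite ?andbT ?andbF //.
have hk' : forall i, (#|[set g | p g == Some i]| <= k)%N.
  by move=> i; rewrite hpS; have [_ h _] := hS' i.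
have [b [hb hpb]] := extend k (Ordinal hn) hmk _ p (erefl _) hk'.
have hSb : forall i, S i \subset bundle b i.
  move=> i; apply/fintype.subsetP => g gS; rewrite inE; apply/eqP; apply: hpb.
  move: gS; rewrite key => /andP[/eqP e gS].
  by rewrite ffunE gS e.
set q := minn k M.
have hq0 : (0 < q)%N by rewrite /q; lia.
have hesw : q%:R * v / M%:R <= ESW u b.
  apply: ESW_ge.
    rewrite ler_pdivrMr ?ltr0n // mul1r.
    apply: le_trans (_ : q%:R * 1 <= _); first by apply: ler_wpM2l => //; exact: ler0n.
    by rewrite mulr1 ler_nat /q geq_minr.
  move=> i; have [_ _ hi] := hS' i.
  apply: le_trans (_ : \sum_(g in S i) u i g <= _).
    by rewrite ler_pdivrMr ?ltr0n // [X in _ <= X]mulrC.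
  rewrite /util [X in _ <= X](big_setID (S i)) /= (finset.setIidPr (hSb i)) lerDl.
  by apply: sumr_ge0 => g _; exact: u0.
have hpos : 0 < q%:R * v / M%:R.
  by apply: divr_gt0; [apply: mulr_gt0 => //; rewrite ltr0n | rewrite ltr0n].
have hc : q%:R * v / M%:R <= maxC_ESW k u := le_trans hesw (maxC_ge k u b hb).
case: eqP => [e|_]; first by move: hpos; rewrite ltNge -e hc.
rewrite lee_fin.
have c0 : 0 < maxC_ESW k u := lt_le_trans hpos hc.
set X := Num.max _ _.
have X0 : 0 <= X by rewrite le_max ler01 orbT.
rewrite ler_pdivrMr //.
have hX : M%:R <= X * q%:R.
  case: (leqP k M) => hkM.
    rewrite /q (minn_idPl hkM) -ler_pdivrMr ?ltr0n //.
    by rewrite /X le_max lexx.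
  rewrite /q (minn_idPr (ltnW hkM)).
  by apply: ler_peMl => //; rewrite /X le_max lexx orbT.
apply: le_trans (_ : X * (q%:R * v / M%:R) <= _); last by apply: ler_wpM2l.
have -> : X * (q%:R * v / M%:R) = (X * q%:R / M%:R) * v by rewrite !mulrA mulrAC.
apply: ler_peMl; first exact: ltW.
by rewrite ler_pdivlMr ?ltr0n // mul1r.
Qed.

End Gen.

Lemma lower (R : realType) (n' m k : nat) : (n'.+1 <= m)%N -> (0 < k)%N ->
  exists u : 'I_n'.+1 -> 'I_m -> R, @instance R n'.+1 m u /\
   ((Num.max ((m - n'.+1 + 1)%:R / k%:R) 1)%:E <= esw_ratio k u)%E.
Proof.
move=> hnm hk.
set M := (m - n'.+1 + 1)%N.
have hMm : (M + n' = m)%N by rewrite /M; lia.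
have hM0 : (0 < M)%N by rewrite /M; lia.
have hMR : (M%:R : R) != 0 by rewrite pnatr_eq0 -lt0n.
pose u0 := fun (i : 'I_n'.+1) (g : 'I_m) =>
  if (i == 0 :> nat) then (if (g < M)%N then (M%:R : R)^-1 else 0)
  else (if (g == (M + i - 1)%N :> nat) then 1 else 0).
have u0p : forall i g, 0 <= u0 i g.
  move=> i g; rewrite /u0; case: ifP => _; case: ifP => _ //.
have hinst : @instance R n'.+1 m u0.
  split; first exact: u0p.
  move=> i; rewrite /u0; case hi0 : (i == 0 :> nat).
    transitivity (\sum_(0 <= g < m) (if (g < M)%N then (M%:R : R)^-1 else 0)).
      by rewrite big_mkord.
    rewrite (@big_cat_nat _ _ _ M) //=; last by rewrite -hMm leq_addr.
    rewrite [X in _ + X]big_nat_cond [X in _ + X]big1 ?addr0; last first.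
      by move=> g /andP[/andP[hg _] _]; rewrite ltnNge hg.
    rewrite (eq_big_nat _ _ (F2 := fun _ => (M%:R : R)^-1)); last by move=> g /andP[_ ->].
    rewrite sumr_const_nat subn0.
    have -> : (M%:R : R)^-1 *+ M = (M%:R)^-1 * M%:R by rewrite mulr_natr.
    by rewrite mulVf.
  have ht : (M + i - 1 < m)%N by have := ltn_ord i; move: hi0; lia.
  rewrite (bigD1 (Ordinal ht)) //= eqxx big1 ?addr0 // => g hg.
  case: eqP => // e; move: hg; by rewrite -val_eqE /= e eqxx.
exists u0; split => //.
pose a0 := [ffun g : 'I_m => if (g < M)%N then ord0 else (inord (g - M + 1)%N : 'I_n'.+1)].
have hOPT : 1 <= OPT_ESW u0.
  apply: le_trans (@OPT_ge _ _ _ u0 a0); apply: ESW_ge => // i.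
  case hi0 : (i == 0 :> nat).
    have [_ u1] := hinst.
    rewrite -(u1 i) /util [X in _ <= X]big_mkcond /=; apply: ler_sum => g _.
    rewrite inE ffunE /u0 hi0.
    case: ifP => hgM; last by case: ifP.
    have -> : (ord0 == i) by apply/eqP/val_inj; rewrite /= (eqP hi0).
    by [].
  have ht : (M + i - 1 < m)%N by have := ltn_ord i; move: hi0; lia.
  have hg0 : Ordinal ht \in bundle a0 i.
    rewrite inE ffunE /=.
    have -> : (M + i - 1 < M)%N = false by move: hi0; lia.
    apply/eqP/val_inj; rewrite /= inordK; move: hi0; have := ltn_ord i; lia.
  rewrite /util (bigD1 (Ordinal ht)) //= /u0 hi0 /= eqxx lerDl.
  by apply: sumr_ge0 => g _; case: ifP.
have hC : maxC_ESW k u0 <= (M%:R)^-1 * k%:R.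
  apply: maxC_le; first by rewrite mulr_ge0 ?invr_ge0 ?ler0n.
  move=> a /forallP ha; apply: le_trans (@ESW_le_util _ _ _ u0 a ord0) _.
  rewrite /util; apply: le_trans (_ : \sum_(g in bundle a ord0) (M%:R : R)^-1 <= _).
    apply: ler_sum => g _; rewrite /u0 /=; case: ifP => _ //.
  apply: le_trans (_ : (M%:R : R)^-1 * #|bundle a ord0|%:R <= _).
    by rewrite mulr_natr sumr_const.
  apply: ler_wpM2l; first by rewrite invr_ge0 ler0n.
  by rewrite ler_nat; exact: ha.
have hC1 : maxC_ESW k u0 <= 1.
  by apply: maxC_le => // a _; exact: ESW_le1.
rewrite /esw_ratio.
have -> : (OPT_ESW u0 == 0) = false by apply/negbTE; rewrite gt_eqF // (lt_le_trans ltr01).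
case: eqP => [_|hC0]; first exact: leey.
have c0 : 0 < maxC_ESW k u0 by rewrite lt_def maxC_ge0 andbT; apply/eqP.
rewrite lee_fin ge_max !ler_pdivlMr // mul1r (le_trans hC1 hOPT) andbT.
apply: le_trans hOPT.
apply: le_trans (_ : M%:R / k%:R * ((M%:R)^-1 * k%:R) <= _).
  by apply: ler_wpM2l => //; rewrite divr_ge0 ?ler0n.
have hk0 : (k%:R : R) != 0 by rewrite pnatr_eq0 -lt0n.
by rewrite mulrACA mulfV // mulVf // mulr1.
Qed.

Local Open Scope classical_set_scope.
Local Open Scope ring_scope.

Theorem theorem2 (R : realType) (n m k : nat) :
  (0 < n)%N -> (0 < m)%N -> (0 < k)%N -> (n <= m)%N -> (k < m)%N -> (m <= k * n)%N ->
  ereal_sup [set @esw_ratio R n m k u | u in @instance R n m] =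
  (Num.max ((m - n + 1)%:R / k%:R) 1)%:E.
Proof.
move=> hn hm hk hnm hkm hmk.
apply/eqP; rewrite eq_le; apply/andP; split.
  by apply: ge_ereal_sup => x [u hu <-]; exact: (@upper R n m k u hn hk hnm hmk hu).
case: n hn hnm hmk => [//|n'] _ hnm hmk.
have [u [hu hr]] := @lower R n' m k hnm hk.
apply: le_trans hr _; apply: ereal_sup_ubound; by exists u.
Qed.
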